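(* Every path-connected almost totally disconnected compact space is a Corson compact, i.e. is homeomorphic to a subspace of $\Sigma[0,1]^\Gamma$ for some set $\Gamma$.
   Context: For a set $\Gamma$, $\Sigma[0,1]^\Gamma$ is the subspace of $[0,1]^\Gamma$ (product topology) of points with countable support (i.e. $x_\gamma\neq0$ for only countably many $\gamma$), and $\Sigma_0^1[0,1]^\Gamma$ is the subspace of $[0,1]^\Gamma$ consisting of those $x$ with $x_\gamma\in\{0,1\}$ for all but countably many $\gamma$. A compact space is almost totally disconnected if it is homeomorphic to a subspace of $\Sigma_0^1[0,1]^\Gamma$ for some set $\Gamma$. *)

(* Defs.v *)
From Stdlib Require Import Reals List Lra.
Open Scope R_scope.

Record space := Space {
  pt :> Type;
  is_open : (pt -> Prop) -> Prop;
  open_full : is_open (fun _ => True);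
  open_inter : forall U V, is_open U -> is_open V -> is_open (fun x => U x /\ V x);
  open_union : forall F : (pt -> Prop) -> Prop,
      (forall U, F U -> is_open U) -> is_open (fun x => exists U, F U /\ U x)
}.
Arguments is_open {s} U.

Definition continuous {X Y : space} (f : X -> Y) : Prop :=
  forall V : Y -> Prop, is_open V -> is_open (fun x => V (f x)).

Definition compact (X : space) : Prop :=
  forall F : (X -> Prop) -> Prop,
    (forall U, F U -> is_open U) ->
    (forall x, exists U, F U /\ U x) ->
    exists l : list (X -> Prop), Forall F l /\ (forall x, exists U, In U l /\ U x).

Definition I01 : Type := { r : R | 0 <= r <= 1 }.
Definition I0 : I01 := exist _ 0 (conj (Rle_refl 0) Rle_0_1).
Definition I1 : I01 := exist _ 1 (conj Rle_0_1 (Rle_refl 1)).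

Definition openI (U : I01 -> Prop) : Prop :=
  forall x, U x -> exists eps, 0 < eps /\
    forall y : I01, Rabs (proj1_sig y - proj1_sig x) < eps -> U y.

Lemma openI_full : openI (fun _ => True).
Proof. intros x _. exists 1. split; [lra|]; auto. Qed.

Lemma openI_inter U V : openI U -> openI V -> openI (fun x => U x /\ V x).
Proof.
  intros HU HV x [Ux Vx].
  destruct (HU x Ux) as [e1 [He1 H1]]. destruct (HV x Vx) as [e2 [He2 H2]].
  exists (Rmin e1 e2). split; [apply Rmin_pos; lra|].
  intros y Hy. split; [apply H1 | apply H2];
  [apply Rlt_le_trans with (1 := Hy); apply Rmin_l
  |apply Rlt_le_trans with (1 := Hy); apply Rmin_r].
Qed.

Lemma openI_union (F : (I01 -> Prop) -> Prop) :
  (forall U, F U -> openI U) -> openI (fun x => exists U, F U /\ U x).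
Proof.
  intros HF x [U [FU Ux]]. destruct (HF U FU x Ux) as [e [He H]].
  exists e. split; [exact He|]. intros y Hy. exists U. split; auto.
Qed.

Definition unit_interval : space :=
  Space I01 openI openI_full openI_inter openI_union.

Definition path_connected (X : space) : Prop :=
  forall x y : X, exists p : unit_interval -> X,
    continuous p /\ p I0 = x /\ p I1 = y.

(* The Tychonoff product [0,1]^Gamma: the topology generated by the subbasic
   sets {x | V (x g)} with V open in [0,1] (opens = unions of finite
   intersections of subbasic sets). *)
Definition openP (G : Type) (U : (G -> I01) -> Prop) : Prop :=
  forall x, U x -> exists l : list (G * (I01 -> Prop)),
    Forall (fun p => openI (snd p)) l /\
    Forall (fun p => snd p (x (fst p))) l /\
    (forall y, Forall (fun p => snd p (y (fst p))) l -> U y).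

Lemma openP_full G : openP G (fun _ => True).
Proof. intros x _. exists nil. repeat split; auto. Qed.

Lemma openP_inter G U V : openP G U -> openP G V -> openP G (fun x => U x /\ V x).
Proof.
  intros HU HV x [Ux Vx].
  destruct (HU x Ux) as [l1 [A1 [B1 C1]]]. destruct (HV x Vx) as [l2 [A2 [B2 C2]]].
  exists (l1 ++ l2). repeat split.
  - apply Forall_app; auto.
  - apply Forall_app; auto.
  - apply C1. apply Forall_app in H. tauto.
  - apply C2. apply Forall_app in H. tauto.
Qed.

Lemma openP_union G (F : ((G -> I01) -> Prop) -> Prop) :
  (forall U, F U -> openP G U) -> openP G (fun x => exists U, F U /\ U x).
Proof.
  intros HF x [U [FU Ux]]. destruct (HF U FU x Ux) as [l [A [B C]]].
  exists l. repeat split; auto. intros y Hy. exists U. split; auto.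
Qed.

Definition cube (G : Type) : space :=
  Space (G -> I01) (openP G) (openP_full G) (openP_inter G) (openP_union G).

Definition countable_set {G : Type} (P : G -> Prop) : Prop :=
  exists f : G -> nat, forall a b, P a -> P b -> f a = f b -> a = b.

Definition Sigma (G : Type) (x : G -> I01) : Prop :=
  countable_set (fun g => proj1_sig (x g) <> 0).

Definition Sigma01 (G : Type) (x : G -> I01) : Prop :=
  countable_set (fun g => proj1_sig (x g) <> 0 /\ proj1_sig (x g) <> 1).

Definition embeds_into (X Y : space) (S : Y -> Prop) : Prop :=
  exists f : X -> Y,
    (forall x, S (f x)) /\
    (forall a b, f a = f b -> a = b) /\
    continuous f /\
    (forall U : X -> Prop, is_open U ->
       exists V : Y -> Prop, is_open V /\ forall x, U x <-> V (f x)).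

Definition almost_totally_disconnected (X : space) : Prop :=
  compact X /\ exists G : Type, embeds_into X (cube G) (Sigma01 G).

Definition Corson_compact (X : space) : Prop :=
  compact X /\ exists G : Type, embeds_into X (cube G) (Sigma G).

(* Main.v *)
Require Import Defs.
From Stdlib Require Import Reals Lra Lia ZArith List Classical ClassicalEpsilon FunctionalExtensionality ProofIrrelevance Cantor.
Import Defs.
Open Scope R_scope.

Definition clampR (r : R) : R := Rmin 1 (Rmax 0 r).
Lemma clampR_in r : 0 <= clampR r <= 1.
Proof. unfold clampR, Rmin, Rmax; repeat destruct Rle_dec; lra. Qed.
Definition clamp (r : R) : I01 := exist _ (clampR r) (clampR_in r).
Lemma clamp_lip a b : Rabs (clampR a - clampR b) <= Rabs (a - b).
Proof. unfold clampR, Rmin, Rmax; repeat destruct Rle_dec; unfold Rabs; repeat destruct Rcase_abs; lra. Qed.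
Lemma clampR_id r : 0 <= r <= 1 -> clampR r = r.
Proof. unfold clampR, Rmin, Rmax; repeat destruct Rle_dec; lra. Qed.

Lemma I01_eq (a b : I01) : proj1_sig a = proj1_sig b -> a = b.
Proof. destruct a, b; simpl; intros ->. f_equal. apply proof_irrelevance. Qed.

Definition contI (g : I01 -> I01) := forall W, openI W -> openI (fun t => W (g t)).

Lemma ball_open c eps : openI (fun s : I01 => Rabs (proj1_sig s - c) < eps).
Proof.
  intros x Hx. exists (eps - Rabs (proj1_sig x - c)). split; [lra|].
  intros y Hy. unfold Rabs in *; repeat destruct Rcase_abs; lra.
Qed.

Lemma contI_cont g : contI g -> continuity (fun r => proj1_sig (g (clamp r))).
Proof.
  intros Hg x. unfold continuity_pt, continue_in, limit1_in, limit_in.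
  intros eps Heps. simpl. unfold R_dist.
  destruct (Hg _ (ball_open (proj1_sig (g (clamp x))) eps) (clamp x)) as [d [Hd H]].
  { unfold Rminus; rewrite Rplus_opp_r, Rabs_R0; lra. }
  exists d. split; [lra|]. intros y [_ Hy]. apply H. simpl.
  eapply Rle_lt_trans; [apply clamp_lip|exact Hy].
Qed.

Lemma clamp0 : clamp 0 = I0.
Proof. apply I01_eq; simpl; apply clampR_id; lra. Qed.
Lemma clamp1 : clamp 1 = I1.
Proof. apply I01_eq; simpl; apply clampR_id; lra. Qed.

Lemma ivt_I g : contI g -> proj1_sig (g I0) <> proj1_sig (g I1) ->
  exists t, 0 < proj1_sig (g t) < 1.
Proof.
  intros Hg Hne. apply NNPP; intro Hno.
  assert (Hall : forall t, proj1_sig (g t) = 0 \/ proj1_sig (g t) = 1).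
  { intro t. destruct (proj2_sig (g t)) as [h1 h2].
    destruct (Req_dec_T (proj1_sig (g t)) 0); [now left|].
    destruct (Req_dec_T (proj1_sig (g t)) 1); [now right|].
    exfalso; apply Hno; exists t; lra. }
  set (F := fun r => proj1_sig (g (clamp r)) - /2).
  assert (HF : continuity F).
  { unfold F. apply continuity_minus; [apply contI_cont; exact Hg| apply continuity_const; intros ? ?; auto]. }
  destruct (IVT_cor F 0 1 HF) as [z [_ Hz]].
  { lra. }
  { unfold F; rewrite clamp0, clamp1.
    destruct (Hall I0) as [e0|e0], (Hall I1) as [e1|e1]; rewrite e0, e1 in *; try lra; congruence. }
  unfold F in Hz. destruct (Hall (clamp z)); lra.
Qed.

Definition qpt (a b : nat) : I01 := clamp (INR a / INR (S b)).

Lemma dense (t : I01) eps : 0 < eps ->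
  exists a b, Rabs (proj1_sig (qpt a b) - proj1_sig t) < eps.
Proof.
  intros He. destruct t as [t Ht]; simpl.
  destruct (INR_unbounded (/eps)) as [n Hn].
  set (N := INR (S n)).
  assert (HN : INR n < N) by (unfold N; apply lt_INR; lia).
  assert (HN0 : 0 < N) by (pose proof (pos_INR n); lra).
  set (u := / N).
  assert (Hu : N * u = 1) by (unfold u; field; lra).
  assert (Hu0 : 0 < u) by (unfold u; apply Rinv_0_lt_compat; lra).
  assert (Hue : u < eps).
  { unfold u. apply Rlt_le_trans with (/ / eps).
    - apply Rinv_lt_contravar; [apply Rmult_lt_0_compat; [apply Rinv_0_lt_compat|]|]; lra.
    - rewrite Rinv_inv; lra. }
  set (r := t * N).
  destruct (archimed r) as [A1 A2].
  set (k := (up r - 1)%Z).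
  assert (Hk : IZR k = IZR (up r) - 1) by (unfold k; rewrite minus_IZR; reflexivity).
  assert (Hk0 : (0 <= k)%Z).
  { assert (-1 < IZR k) by (unfold r in *; pose proof (Rmult_le_pos t N); nra).
    apply lt_IZR in H. lia. }
  exists (Z.to_nat k), n. unfold qpt, clamp; cbn [proj1_sig]. fold N.
  pose proof (clamp_lip (INR (Z.to_nat k)/N) t) as L; rewrite (clampR_id t) in L by lra.
  eapply Rle_lt_trans; [exact L|].
  rewrite INR_IZR_INZ, Z2Nat.id by exact Hk0. fold N. unfold Rdiv. fold u.
  assert (IZR k <= r) by lra. assert (r < IZR k + 1) by lra. unfold r in *.
  assert (IZR k * u <= t) by nra. assert (t < IZR k * u + u) by nra.
  unfold Rabs; destruct Rcase_abs; lra.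
Qed.

Lemma mid_open : openI (fun v : I01 => 0 < proj1_sig v < 1).
Proof.
  intros x Hx. exists (Rmin (proj1_sig x) (1 - proj1_sig x)).
  split; [apply Rmin_pos; lra|]. intros y Hy.
  pose proof (Rmin_l (proj1_sig x) (1 - proj1_sig x)).
  pose proof (Rmin_r (proj1_sig x) (1 - proj1_sig x)).
  unfold Rabs in Hy; destruct Rcase_abs; lra.
Qed.

Lemma dense_hit g : contI g -> (exists t, 0 < proj1_sig (g t) < 1) ->
  exists a b, 0 < proj1_sig (g (qpt a b)) < 1.
Proof.
  intros Hg [t Ht]. destruct (Hg _ mid_open t Ht) as [d [Hd H]].
  destruct (dense t d Hd) as [a [b Hab]]. exists a, b. apply H. exact Hab.
Qed.

Lemma count_union {G : Type} (C : nat -> nat -> G -> Prop) (P : G -> Prop) :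
  (forall a b, countable_set (C a b)) -> (forall g, P g -> exists a b, C a b g) ->
  countable_set P.
Proof.
  intros HC HP.
  set (F := fun a b => epsilon (inhabits (fun _ : G => 0%nat))
          (fun f => forall u v, C a b u -> C a b v -> f u = f v -> u = v)).
  assert (HF : forall a b u v, C a b u -> C a b v -> F a b u = F a b v -> u = v).
  { intros a b. unfold F. apply (epsilon_spec (inhabits (fun _ : G => 0%nat))
          (fun f => forall u v, C a b u -> C a b v -> f u = f v -> u = v)). apply HC. }
  set (AB := fun g => epsilon (inhabits (0%nat, 0%nat)) (fun ab => C (fst ab) (snd ab) g)).
  assert (HAB : forall g, P g -> C (fst (AB g)) (snd (AB g)) g).
  { intros g Hg. unfold AB. apply (epsilon_spec (inhabits (0%nat,0%nat)) (fun ab => C (fst ab) (snd ab) g)).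
    destruct (HP g Hg) as [a [b H]]. exists (a, b); exact H. }
  exists (fun g => to_nat (to_nat (AB g), F (fst (AB g)) (snd (AB g)) g)).
  intros u v Hu Hv E.
  apply (f_equal of_nat) in E. rewrite !cancel_of_to in E. injection E as E1 E2.
  apply (f_equal of_nat) in E1. rewrite !cancel_of_to in E1.
  pose proof (HAB u Hu) as Cu. pose proof (HAB v Hv) as Cv.
  rewrite E1 in Cu, E2. eapply HF; eauto.
Qed.

Definition compI (v : I01) : I01.
Proof. exists (1 - proj1_sig v). destruct (proj2_sig v); split; lra. Defined.

Definition hflip (c v : I01) : I01 :=
  if Req_dec_T (proj1_sig c) 1 then compI v else v.

Lemma hflip_inv c v : hflip c (hflip c v) = v.
Proof. unfold hflip; destruct Req_dec_T; auto. apply I01_eq; simpl; ring. Qed.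

Lemma hflip_open c W : openI W -> openI (fun v => W (hflip c v)).
Proof.
  unfold hflip; destruct Req_dec_T; auto.
  intros HW x Hx. destruct (HW _ Hx) as [d [Hd H]]. exists d; split; auto.
  intros y Hy. apply H. simpl. replace (1 - proj1_sig y - (1 - proj1_sig x)) with (- (proj1_sig y - proj1_sig x)) by ring.
  rewrite Rabs_Ropp; exact Hy.
Qed.

Definition Hmap {G : Type} (z0 z : G -> I01) : G -> I01 := fun g => hflip (z0 g) (z g).

Lemma Hmap_open {G : Type} (z0 : G -> I01) V : openP G V -> openP G (fun z => V (Hmap z0 z)).
Proof.
  intros HV z Vz. destruct (HV _ Vz) as [l [A [B C]]].
  exists (map (fun pr => (fst pr, fun v => snd pr (hflip (z0 (fst pr)) v))) l).
  repeat split.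
  - apply Forall_map. eapply Forall_impl; [|exact A]. intros [g W]; simpl. apply hflip_open.
  - apply Forall_map. eapply Forall_impl; [|exact B]. intros [g W]; simpl. auto.
  - intros y Hy. apply C. apply Forall_map in Hy. eapply Forall_impl; [|exact Hy]. intros [g W]; simpl. auto.
Qed.

Lemma coord_cont {X : space} {G : Type} (e : X -> cube G) (p : unit_interval -> X) g :
  continuous e -> continuous p -> contI (fun t => e (p t) g).
Proof.
  intros Ce Cp W HW.
  assert (O : openP G (fun z => W (z g))).
  { intros z Hz. exists ((g, W) :: nil). repeat split; auto.
    intros y Hy. inversion Hy; auto. }
  exact (Cp _ (Ce _ O)).
Qed.

Theorem proposition1 (X : space) :
  compact X -> path_connected X -> almost_totally_disconnected X ->
  Corson_compact X.
Proof.
  intros Hc Hp [_ [G [e [Se [Ie [Ce Oe]]]]]]. split; [exact Hc|]. exists G.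
  destruct (classic (inhabited X)) as [[x0]|Hne].
  2:{ exists e; repeat split; auto. intros x; exfalso; apply Hne; constructor; exact x. }
  exists (fun x => Hmap (e x0) (e x)). split; [| split; [|split]].
  - intro y. destruct (Hp x0 y) as [p [Cp [P0 P1]]].
    unfold Sigma.
    apply (count_union (fun a b g => proj1_sig (e (p (qpt a b)) g) <> 0 /\ proj1_sig (e (p (qpt a b)) g) <> 1)).
    { intros a b. apply Se. }
    intros g Hnz.
    assert (Hg := coord_cont e p g Ce Cp).
    destruct (dense_hit _ Hg) as [a [b Hab]].
    2:{ exists a, b. lra. }
    assert (E0 : proj1_sig (e (p I0) g) = proj1_sig (e x0 g)) by (rewrite P0; reflexivity).
    assert (E1 : proj1_sig (e (p I1) g) = proj1_sig (e y g)) by (rewrite P1; reflexivity).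
    unfold Hmap, hflip in Hnz. destruct Req_dec_T as [E|E].
    + apply ivt_I; auto. rewrite E0, E1, E. simpl in Hnz. intro H; apply Hnz; rewrite <- H; ring.
    + destruct (Req_dec_T (proj1_sig (e x0 g)) (proj1_sig (e y g))) as [E2|E2].
      * exists I0. rewrite E0. destruct (proj2_sig (e x0 g)). rewrite E2 in *.
        destruct (Req_dec_T (proj1_sig (e y g)) 0); [contradiction|].
        lra.
      * apply ivt_I; auto. rewrite E0, E1; exact E2.
  - intros a b Hab. apply Ie. extensionality g.
    apply (f_equal (fun f => f g)) in Hab. unfold Hmap in Hab.
    rewrite <- (hflip_inv (e x0 g) (e a g)), Hab, hflip_inv. reflexivity.
  - intros V HV. exact (Ce _ (Hmap_open (e x0) V HV)).
  - intros U HU. destruct (Oe U HU) as [V [HV HUV]].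
    exists (fun z => V (Hmap (e x0) z)). split; [apply Hmap_open; exact HV|].
    intro x. rewrite HUV.
    assert (Hm : Hmap (e x0) (Hmap (e x0) (e x)) = e x).
    { extensionality g. unfold Hmap. apply hflip_inv. }
    rewrite Hm. tauto.
Qed.
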